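(* There exists a three-point set $X\subset \mathbb{S}^1$ that is not a spherical suborbit of any finite group action: there is no finite group $G$, no $n\ge 2$ and no orthogonal linear action of $G$ on $\mathbb{R}^n$ (with $\mathbb{R}^2\subset\mathbb{R}^n$ included as the first two coordinates, so $\mathbb{S}^1\subset\mathbb{S}^{n-1}$) such that $X$ is contained in a single $G$-orbit.
   Context: $\mathbb{S}^{m-1}$ denotes the unit sphere in $\mathbb{R}^m$. A set $X\subset\mathbb{S}^{k-1}$ is a spherical suborbit of a group $G$ if $X$ is contained in an orbit of $G$ with respect to some orthogonal action of $G$ on a sphere $\mathbb{S}^{n-1}$ ($n\ge k$) containing $\mathbb{S}^{k-1}$ isometrically in the standard way. *)

(* Defs.v *)
From HB Require Import structures.
From mathcomp Require Import all_boot all_order all_algebra all_fingroup.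
From mathcomp Require Import Rstruct.
From Stdlib Require Import Reals.
Set Implicit Arguments. Unset Strict Implicit. Unset Printing Implicit Defensive.
Import GRing.Theory Num.Theory.
Local Open Scope ring_scope.

Definition orthogonal_mx (n : nat) (A : 'M[R]_n) : Prop := A *m A^T = 1%:M.

Definition on_S1 (p : R * R) : Prop := p.1 ^+ 2 + p.2 ^+ 2 = 1.

Definition embed2 (n : nat) (p : R * R) : 'cV[R]_n :=
  \col_(i < n) (if val i == 0%N then p.1 else if val i == 1%N then p.2 else 0).

Definition orth_action (gT : finGroupType) (G : {group gT}) (n : nat)
    (rho : gT -> 'M[R]_n) : Prop :=
  (forall g, g \in G -> orthogonal_mx (rho g)) /\
  (forall g h, g \in G -> h \in G -> rho (g * h)%g = rho g *m rho h).

Definition in_one_orbit (gT : finGroupType) (G : {group gT}) (n : nat)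
    (rho : gT -> 'M[R]_n) (X : seq (R * R)) : Prop :=
  exists v : 'cV[R]_n, forall p, p \in X -> exists2 g, g \in G & rho g *m v = embed2 n p.

(* Main.v *)
Require Import Defs.
From HB Require Import structures.
From mathcomp Require Import all_boot all_order all_algebra all_fingroup.
From mathcomp Require Import Rstruct.
From Stdlib Require Import Reals.
From mathcomp Require Import ring lra.
Set Implicit Arguments. Unset Strict Implicit. Unset Printing Implicit Defensive.
Import GRing.Theory Num.Theory.
Local Open Scope ring_scope.

Section Key.
Variables (gT : finGroupType) (g h k : gT).
Local Notation N := #|gT|.

Definition Mgen (Rg : pzRingType) : 'M[Rg]_N :=
  \matrix_(i, j) (2%:R * (enum_val j == (enum_val i * g)%g)%:R
                + 2%:R * (enum_val j == (enum_val i * h)%g)%:R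
                - 3%:R * (enum_val j == (enum_val i * k)%g)%:R).

Lemma Mgen_map (aR rR : pzRingType) (f : {rmorphism aR -> rR}) :
  map_mx f (Mgen aR) = Mgen rR.
Proof.
apply/matrixP => i j; rewrite !mxE.
by rewrite rmorphB rmorphD !rmorphM !rmorph_nat.
Qed.

Lemma sk_inj : injective (fun i : 'I_N => enum_rank (enum_val i * k)%g).
Proof.
move=> i j /(congr1 enum_val); rewrite !enum_rankK => /mulIg.
exact: enum_val_inj.
Qed.

Definition sk : 'S_N := perm sk_inj.

Lemma Mgen_Z2 : Mgen [the pzRingType of 'Z_2] = perm_mx sk.
Proof.
apply/matrixP => i j; rewrite !mxE permE.
have -> : (2%:R : 'Z_2) = 0 by apply/eqP.
have -> : (3%:R : 'Z_2) = 1 by apply/eqP.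
rewrite !mul0r add0r mul1r.
have -> : (enum_rank (enum_val i * k)%g == j) = (enum_val j == (enum_val i * k)%g).
  by rewrite eq_sym -(can_eq enum_rankK) enum_valK.
by case: (_ == _); apply/eqP.
Qed.

Lemma detM_neq0 : \det (Mgen int) != 0.
Proof.
apply/negP => /eqP H.
have := det_map_mx (intr : int -> 'Z_2) (Mgen int).
rewrite H rmorph0 Mgen_map Mgen_Z2 det_perm.
by case: (odd_perm sk); move/eqP.
Qed.

Lemma key (W : gT -> R) :
  (forall c, 2 * W (c * g)%g + 2 * W (c * h)%g - 3 * W (c * k)%g = 0) ->
  forall c, W c = 0.
Proof.
move=> HW c.
set M := Mgen R.
have uM : M \in unitmx.
  rewrite unitmxE unitfE /M -(Mgen_map (intr : int -> R)) det_map_mx.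
  by rewrite intr_eq0 detM_neq0.
set w : 'cV[R]_N := \col_j W (enum_val j).
have Mw : M *m w = 0.
  apply/matrixP => i j; rewrite !mxE.
  apply: etrans (HW (enum_val i)).
  under eq_bigr => l _ do rewrite !mxE mulrBl mulrDl.
  rewrite !big_split /= sumrN.
  have E : forall d : gT, \sum_(l < N) (enum_val l == d)%:R * W (enum_val l) = W d.
    move=> d; rewrite (bigD1 (enum_rank d)) //= enum_rankK eqxx mul1r big1 ?addr0 //.
    move=> l /negbTE Hl; case: eqP => [El|]; last by rewrite mul0r.
    by move: Hl; rewrite -El enum_valK eqxx.
  by rewrite -!E !mulr_sumr; congr (_ + _ - _); apply: eq_bigr => l _; rewrite mulrA.
have : w = 0 by rewrite -(mulKmx uM w) Mw mulmx0.
move/matrixP => /(_ (enum_rank c) 0); rewrite !mxE enum_rankK => ->.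
by [].
Qed.
End Key.

Definition s63 : R := Num.sqrt (63/64).
Definition q1 : R * R := (1, 0).
Definition q2 : R * R := (1/8, s63).
Definition q3 : R * R := (3/4, 2/3 * s63).

Lemma s63sq : s63 ^+ 2 = 63/64.
Proof. by rewrite /s63 sqr_sqrtr //; lra. Qed.

Lemma rel n : 2 *: embed2 n q1 + 2 *: embed2 n q2 - 3 *: embed2 n q3 = 0.
Proof.
apply/matrixP => i j; rewrite !mxE /=.
case: eqP => _ /=; first lra.
case: eqP => _ /=; first lra.
lra.
Qed.

Lemma aux3 (F : realFieldType) (x : F) : x ^+ 2 = 63/64 -> (3/4) ^+ 2 + (2/3 * x) ^+ 2 = 1.
Proof. move=> H; have -> : (2/3 * x) ^+ 2 = 4/9 * x ^+ 2 by field. rewrite H; lra. Qed.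

Lemma neqs (F : realFieldType) : [/\ (1 : F) != 1/8, (1 : F) != 3/4 & (1/8 : F) != 3/4].
Proof. by split; apply/eqP => E; lra. Qed.

Lemma z3 (F : pzRingType) : 2 * 0 + 2 * 0 - 3 * 0 = 0 :> F.
Proof. by rewrite !mulr0 addr0 subrr. Qed.

Theorem theorem2 :
  exists p1 p2 p3 : R * R,
    [/\ on_S1 p1, on_S1 p2, on_S1 p3 & uniq [:: p1; p2; p3]] /\
    forall (gT : finGroupType) (G : {group gT}) (n : nat) (rho : gT -> 'M[R]_n),
      leq 2 n -> orth_action G rho -> ~ in_one_orbit G rho [:: p1; p2; p3].
Proof.
exists q1, q2, q3; split.
  split; rewrite /on_S1.
  - rewrite /q1 /=; lra.
  - rewrite /q2 /=; have := s63sq; lra.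
  - exact: (aux3 s63sq).
  - rewrite /= !inE /q1 /q2 /q3 !negb_or !xpair_eqE.
    have [h1 h2 h3] := neqs R.
    by rewrite (negbTE h1) (negbTE h2) (negbTE h3).
move=> gT G n rho H2 [_ Hhom] [v Hv].
have [g Gg Eg] := Hv q1 (mem_head _ _).
have [h Gh Eh] : exists2 h, h \in G & rho h *m v = embed2 n q2 by apply: Hv; rewrite !inE eqxx !orbT.
have [k Gk Ek] : exists2 h, h \in G & rho h *m v = embed2 n q3 by apply: Hv; rewrite !inE eqxx !orbT.
have n0 : leq 1 n by apply: ltnW.
pose i0 : 'I_n := Ordinal n0.
pose W c := if c \in G then (rho c *m v) i0 0 else 0.
have HW : forall c, 2 * W (c * g)%g + 2 * W (c * h)%g - 3 * W (c * k)%g = 0.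
  move=> c; rewrite /W !groupMr //.
  case: ifP => Gc; last by apply: z3.
  rewrite !Hhom // -!mulmxA Eg Eh Ek.
  have := congr1 (fun M => (rho c *m M) i0 0) (rel n).
  rewrite /= mulmx0 !mulmxDr mulmxN -!scalemxAr.
  move: (rho c *m embed2 n q1) (rho c *m embed2 n q2) (rho c *m embed2 n q3) => A B C.
  by rewrite !mxE.
have := key HW k.
rewrite /W Gk Ek mxE /= => H.
move: H; lra.
Qed.
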